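(* Let $\mu$ be a probability density on $[q]^n\times[q]^n$ such that $H_\infty(\mu_I)\ge1.9\log q\cdot|I|-t$ for all $I\subseteq[n]$. Then for all $d\in\mathbb N$ there exists a partition $[q]^n\times[q]^n=\left(\bigcup_{i\in[N]}\mathcal R_i\right)\cup\mathsf{Error}$, where $\mathcal R_i=\mathcal A_i\times\mathcal B_i$ are combinatorial rectangles ($\mathcal A_i,\mathcal B_i\subseteq[q]^n$), such that (1) for each $i\in[N]$, if $(X_i,Y_i)\sim\mu$ conditioned on $\mathcal R_i$, then $X_i,Y_i$ are aligned $d$-CBD; and (2) $\mu(\mathsf{Error})\le2^t\cdot(d\,q^{-0.05})^d$.
   Context: Logarithms base 2. A density on a finite domain $\mathcal D$ is $\mu\ge0$ with uniform average $1$; $Z\sim\mu$ means $\Pr[Z=z]=\mu(z)/|\mathcal D|$; $\mu(S)=\Pr_{Z\sim\mu}[Z\in S]$. For $I\subseteq[n]$, $\mu_I$ is the density on $[q]^I\times[q]^I$ of $(X_I,Y_I)$ where $(X,Y)\sim\mu$ and $X_I$ denotes projection to coordinates in $I$; $H_\infty(\mu_I)=\min\log(q^{2|I|}/\mu_I(x,y))$. For a random variable $Z$, $H_\infty(Z)=\min_z\log(1/\Pr[Z=z])$. A random variable $X$ on $[q]^n$ is $d$-CBD if there is $I\subseteq[n]$, $|I|\le d$, with $X_I$ constant and $H_\infty(X_J)\ge0.8\log q\cdot|J|$ for every $J\subseteq[n]\setminus I$; two $d$-CBD random variables are aligned if they have the same such set $I$. *)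

(* Defs.v *)
From HB Require Import structures.
From mathcomp Require Import all_boot all_order all_algebra.
From mathcomp Require Import reals exp.
Set Implicit Arguments. Unset Strict Implicit. Unset Printing Implicit Defensive.
Import Order.TTheory GRing.Theory Num.Theory.
Local Open Scope ring_scope.

Definition cube (n q : nat) := {ffun 'I_n -> 'I_q}.

Section Defs.
Variable R : realType.

Definition log2 (x : R) : R := ln x / ln 2.

(* projection x_I of x to the coordinates in I, encoded as an element of
   'I_n -> option 'I_q (None outside I); this is a bijective encoding of [q]^I. *)
Definition restrict (n q : nat) (I : {set 'I_n}) (x : cube n q)
  : {ffun 'I_n -> option 'I_q} :=
  [ffun i => if i \in I then Some (x i) else None].

Definition is_density (T : finType) (mu : T -> R) : Prop :=
  (forall z, 0 <= mu z) /\ \sum_(z : T) mu z = #|{: T}|%:R.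

Definition pmf_of (T : finType) (mu : T -> R) (z : T) : R := mu z / #|{: T}|%:R.

Definition dprob (T : finType) (mu : T -> R) (S : {set T}) : R :=
  \sum_(z in S) pmf_of mu z.

Definition cond_pmf (T : finType) (mu : T -> R) (S : {set T}) (z : T) : R :=
  if z \in S then mu z / (\sum_(w in S) mu w) else 0.

(* H_oo(f(Z)) >= k where Pr[Z = z] = p z, i.e.
   min_u log(1/Pr[f(Z) = u]) >= k, i.e. Pr[f(Z) = u] <= 2^(-k) for all u. *)
Definition Hinf_ge (T U : finType) (p : T -> R) (f : T -> U) (k : R) : Prop :=
  forall u : U, \sum_(z | f z == u) p z <= powR 2 (- k).

Definition CBD_with (T : finType) (n q : nat) (p : T -> R) (Xof : T -> cube n q)
    (d : nat) (I : {set 'I_n}) : Prop :=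
  [/\ (#|I| <= d)%N,
      (* X_I is constant *)
      (exists u, \sum_(z | restrict I (Xof z) == u) p z = 1) &
      (forall J : {set 'I_n}, J \subset ~: I ->
         Hinf_ge p (fun z => restrict J (Xof z))
                 ((4 / 5) * log2 q%:R * #|J|%:R))].

Definition aligned_CBD (n q : nat) (p : cube n q * cube n q -> R) (d : nat) : Prop :=
  exists I : {set 'I_n},
    CBD_with p (fun z => z.1) d I /\ CBD_with p (fun z => z.2) d I.

End Defs.

(* Main.v *)
Require Import Defs.
From HB Require Import structures.
From mathcomp Require Import all_boot all_order all_algebra.
From mathcomp Require Import reals exp.
From mathcomp Require Import ring lra zify.
Import Order.TTheory GRing.Theory Num.Theory.
Local Open Scope ring_scope.
Set Implicit Arguments. Unset Strict Implicit. Unset Printing Implicit Defensive.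

Lemma step_ineq (R : realType) (a b e c w : R) :
  0 <= a -> 0 <= b -> 0 <= e -> 0 <= c -> 0 <= w ->
  a ^+ 2 = b ^+ 2 + e ^+ 2 -> c * a <= b -> 2 * w <= c ->
  e + w * b <= a.
Proof.
move=> a0 b0 e0 c0 w0 hab hca hw.
have ba : b <= a by nra.
have hwb : w * b <= a / 2.
  have : w * b <= c / 2 * b by nra.
  have : c * b <= a.
    have [c1|c1] := lerP c 1; first by nra.
    have : a * (c - 1) <= 0 by nra.
    nra.
  nra.
have h1 : 0 <= a - w * b by nra.
suff : e ^+ 2 <= (a - w * b) ^+ 2.
  move=> h; have : e <= a - w * b; last by lra.
  by rewrite -(ler_pXn2r (n:=2)) // ?nnegrE.
have h2 : c * a * b <= b * b by apply: ler_wpM2r.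
have h3 : 2 * w * (a * b) <= c * (a * b) by apply: ler_wpM2r => //; exact: mulr_ge0.
nra.
Qed.

Lemma cauchy_schwarz (R : realType) (I : finType) (P : pred I) (x : I -> R) :
  (\sum_(i | P i) x i) ^+ 2 <= #|P|%:R * \sum_(i | P i) x i ^+ 2.
Proof.
set S := \sum_(i | P i) x i; set S2 := \sum_(i | P i) x i ^+ 2.
have [N0|Npos] := posnP #|P|.
  have -> : S = 0 by rewrite /S big_pred0 // => i; have := card0_eq N0 i; rewrite !inE.
  by rewrite expr0n /= N0 mul0r.
set N : R := #|P|%:R.
have NP : 0 < N by rewrite /N ltr0n.
have h : 0 <= \sum_(i | P i) (x i - S / N) ^+ 2.
  by apply: sumr_ge0 => i _; exact: sqr_ge0.
have e : \sum_(i | P i) (x i - S / N) ^+ 2 = S2 - 2 * (S / N) * S + N * (S / N) ^+ 2.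
  transitivity (\sum_(i | P i) (x i ^+ 2 + (- (2 * (S / N))) * x i + (S / N) ^+ 2)).
    by apply: eq_bigr => i _; ring.
  rewrite !big_split /= -mulr_sumr sumr_const -/S -/S2 -mulr_natl -/N; ring.
rewrite e in h.
have : 0 <= N * S2 - S ^+ 2.
  have -> : N * S2 - S ^+ 2 = N * (S2 - 2 * (S / N) * S + N * (S / N) ^+ 2).
    field; lra.
  exact: mulr_ge0 (ltW NP) h.
lra.
Qed.

Section Main.
Variables (R : realType) (n q : nat) (t : R) (mu : cube n q * cube n q -> R).
Hypothesis Hmu : is_density mu.
Variable d : nat.

Local Notation C := (cube n q).
Local Notation T := (cube n q * cube n q)%type.
Local Notation m := (dprob mu).
Local Notation V := {ffun 'I_n -> option 'I_q}.

Lemma pmf_ge0 z : 0 <= pmf_of mu z.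
Proof. by rewrite /pmf_of divr_ge0 // Hmu.1. Qed.

Lemma m_ge0 (S : {set T}) : 0 <= m S.
Proof. by apply: sumr_ge0 => z _; exact: pmf_ge0. Qed.

Lemma m_sub (S1 S2 : {set T}) : S1 \subset S2 -> m S1 <= m S2.
Proof.
move=> sS; rewrite /dprob [X in _ <= X](bigID (fun z => z \in S1)) /=.
rewrite -[X in X <= _]addr0 lerD //; last by apply: sumr_ge0 => z _; exact: pmf_ge0.
rewrite le_eqVlt; apply/orP; left; apply/eqP; apply: eq_bigl => z.
by case zS: (z \in S1); rewrite ?andbT ?andbF //; rewrite (subsetP sS).
Qed.

Lemma m_set0 : m set0 = 0.
Proof. by rewrite /dprob big_pred0 // => z; rewrite inE. Qed.

Lemma m_U (S1 S2 : {set T}) : [disjoint S1 & S2] -> m (S1 :|: S2) = m S1 + m S2.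
Proof.
move=> dis; rewrite /dprob -bigU //=; apply: eq_bigl => z; by rewrite !inE.
Qed.

Lemma m_bigcup (I : finType) (F : I -> {set T}) :
  (forall i j, i != j -> [disjoint F i & F j]) ->
  m (\bigcup_i F i) = \sum_i m (F i).
Proof. by move=> dis; rewrite /dprob partition_disjoint_bigcup. Qed.

Definition goodr (r : {set C} * {set C}) :=
  0 < m (setX r.1 r.2) /\ aligned_CBD (cond_pmf mu (setX r.1 r.2)) d.

Definition part (S : {set T}) (L : seq ({set C} * {set C})) (E : {set T}) :=
  (forall r, r \in L -> goodr r) /\
  (forall z, (count (fun r => z \in setX r.1 r.2) L + (z \in E))%N = (z \in S)).

Lemma part_errS (S : {set T}) L (E : {set T}) : part S L E -> E \subset S.
Proof.
case=> _ h; apply/subsetP => z zE; have := h z; rewrite zE addn1.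
by case: (z \in S).
Qed.

Lemma part_cat (S1 : {set T}) L1 (E1 S2 : {set T}) L2 (E2 : {set T}) :
  part S1 L1 E1 -> part S2 L2 E2 -> [disjoint S1 & S2] ->
  part (S1 :|: S2) (L1 ++ L2) (E1 :|: E2) /\ m (E1 :|: E2) = m E1 + m E2.
Proof.
move=> p1 p2 dis.
have s1 := part_errS p1; have s2 := part_errS p2.
have dE : [disjoint E1 & E2].
  exact: disjointWl s1 (disjointWr s2 dis).
split; last exact: m_U.
case: p1 p2 => g1 h1 [g2 h2]; split.
  by move=> r; rewrite mem_cat => /orP [] ?; [exact: g1 | exact: g2].
move=> z; rewrite count_cat !inE.
have H1 := h1 z; have H2 := h2 z.
have D1 : z \in S1 -> z \in S2 = false by exact: disjointFr dis.
have D2 : z \in E1 -> z \in E2 = false by exact: disjointFr dE.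
move: H1 H2 D1 D2.
case: (z \in S1); case: (z \in S2); case: (z \in E1); case: (z \in E2) => //=;
  move=> H1 H2 D1 D2; rewrite ?addn0 ?addn1 ?addnS; try lia;
  by [have := D1 isT | have := D2 isT].
Qed.

Lemma part_dump (S : {set T}) : part S [::] S.
Proof. by split. Qed.

Lemma part_single A B : goodr (A, B) -> part (setX A B) [:: (A, B)] set0.
Proof.
move=> g; split; first by move=> r; rewrite inE => /eqP ->.
by move=> z /=; rewrite in_set0 !addn0.
Qed.

Lemma part_family (I : finType) (F : I -> {set T}) (b : I -> R) :
  (forall i j, i != j -> [disjoint F i & F j]) ->
  (forall i, exists L E, part (F i) L E /\ m E <= b i) ->
  exists L E, part (\bigcup_i F i) L E /\ m E <= \sum_i b i.
Proof.
move=> dis h.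
suff H : forall k (W : {set I}), #|W| = k ->
    exists L E, part (\bigcup_(i in W) F i) L E /\ m E <= \sum_(i in W) b i.
  have [L [E [p b0]]] := H _ [set: I] erefl.
  exists L, E; split.
    by rewrite (eq_bigl (fun i => i \in [set: I])) // => i; rewrite inE.
  by rewrite (eq_bigl (fun i => i \in [set: I])) // => i; rewrite inE.
elim=> [|k IH] W cW.
  rewrite (cards0_eq cW) !big_set0; exists [::], set0; split.
    by split => // z; rewrite inE.
  by rewrite m_set0.
have : (0 < #|W|)%N by rewrite cW.
rewrite card_gt0 => /set0Pn [i iW].
have cW' : #|W :\ i| = k by rewrite (cardsD1 i W) iW in cW; case: cW.
have [L1 [E1 [p1 b1]]] := h i.
have [L2 [E2 [p2 b2]]] := IH _ cW'.
have niW : i \notin W :\ i by rewrite !inE eqxx.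
have dis' : [disjoint F i & \bigcup_(j in W :\ i) F j].
  apply: bigcup_disjoint => j; rewrite !inE => /andP [ji _].
  by apply: dis; rewrite eq_sym.
have [pc mc] := part_cat p1 p2 dis'.
exists (L1 ++ L2), (E1 :|: E2); split.
  by rewrite -(setD1K iW) bigcup_setU big_set1.
by rewrite mc -(setD1K iW) big_setU1 //=; apply: lerD.
Qed.

Definition constS (I : {set 'I_n}) (A : {set C}) :=
  forall x x', x \in A -> x' \in A -> forall i, i \in I -> x i = x' i.

Lemma restrict_eq (I : {set 'I_n}) (x x' : C) :
  (forall i, i \in I -> x i = x' i) -> restrict I x = restrict I x'.
Proof. by move=> h; apply/ffunP => i; rewrite !ffunE; case: ifP => // /h ->. Qed.

Lemma restrict_at (I : {set 'I_n}) (x x' : C) i :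
  restrict I x = restrict I x' -> i \in I -> x i = x' i.
Proof.
move=> /ffunP /(_ i); rewrite !ffunE => h iI; move: h; rewrite iI.
by case.
Qed.

Lemma dprobE (S : {set T}) : m S = (\sum_(z in S) mu z) / #|{: T}|%:R.
Proof. by rewrite /dprob /pmf_of mulr_suml. Qed.

Lemma cond_sum (S : {set T}) (P : pred T) : 0 < m S ->
  \sum_(z | P z) cond_pmf mu S z = m [set z in S | P z] / m S.
Proof.
move=> mS; rewrite !dprobE.
have cT : #|{: T}|%:R != 0 :> R.
  apply/negP => /eqP c0; move: mS; rewrite dprobE c0 invr0 mulr0.
  by rewrite ltxx.
rewrite /cond_pmf invf_div mulrA divfK //.
rewrite [in RHS](big_mkcond (fun z => z \in [set z in S | P z])) /= mulr_suml.
rewrite big_mkcond /=; apply: eq_bigr => z _; rewrite !inE.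
by case: (P z); case: (z \in S); rewrite ?mul0r.
Qed.

Lemma cond_sum_le1 (S : {set T}) (P : pred T) :
  \sum_(z | P z) cond_pmf mu S z <= 1.
Proof.
have [mS|mS] := ltrP 0 (m S).
  rewrite cond_sum // ler_pdivrMr // mul1r; apply: m_sub.
  by apply/subsetP => z; rewrite inE => /andP [].
rewrite (eq_bigr (fun _ => 0)) ?big1 ?ler01 // => z _.
rewrite /cond_pmf; case: ifP => // zS.
have NP : (0 < #|{: T}|)%N by apply/card_gt0P; exists z.
have -> : \sum_(w in S) mu w = m S * #|{: T}|%:R.
  by rewrite dprobE divfK // pnatr_eq0 -lt0n.
have -> : m S = 0 by apply/eqP; rewrite eq_le mS m_ge0.
by rewrite mul0r invr0 mulr0.
Qed.

Lemma good_of A B (I : {set 'I_n}) :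
  0 < m (setX A B) -> (#|I| <= d)%N -> constS I A -> constS I B ->
  (forall J : {set 'I_n}, J \subset ~: I -> J != set0 ->
     Hinf_ge (cond_pmf mu (setX A B)) (fun z => restrict J z.1)
             ((4 / 5) * log2 q%:R * #|J|%:R)) ->
  (forall J : {set 'I_n}, J \subset ~: I -> J != set0 ->
     Hinf_ge (cond_pmf mu (setX A B)) (fun z => restrict J z.2)
             ((4 / 5) * log2 q%:R * #|J|%:R)) ->
  goodr (A, B).
Proof.
move=> mS cI cA cB h1 h2; split => //; exists I.
have [[x0 y0] z0S] : exists z, z \in setX A B.
  apply/set0Pn; apply/negP => /eqP e; move: mS; rewrite e m_set0 ltxx //.
move: z0S; rewrite inE /= => /andP [x0A y0B].
have J0 : forall (f : T -> V) (J : {set 'I_n}), J = set0 ->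
    Hinf_ge (cond_pmf mu (setX A B)) f ((4 / 5) * log2 q%:R * #|J|%:R).
  move=> f J ->; rewrite cards0 mulr0 => u; rewrite oppr0 powRr0.
  exact: cond_sum_le1.
split; split => //.
- exists (restrict I x0); rewrite cond_sum //.
  have -> : [set z in setX A B | restrict I z.1 == restrict I x0] = setX A B.
    apply/setP => -[x y]; rewrite !inE /=.
    case xA: (x \in A); case yB: (y \in B) => //=.
    by apply/eqP; apply: restrict_eq => i iI; apply: cA.
  by rewrite divff // lt0r_neq0.
- move=> J JI; case: (eqVneq J set0) => [/J0 //|Jn]; exact: h1.
- exists (restrict I y0); rewrite cond_sum //.
  have -> : [set z in setX A B | restrict I z.2 == restrict I y0] = setX A B.
    apply/setP => -[x y]; rewrite !inE /=.
    case xA: (x \in A); case yB: (y \in B) => //=.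
    by apply/eqP; apply: restrict_eq => i iI; apply: cB.
  by rewrite divff // lt0r_neq0.
- move=> J JI; case: (eqVneq J set0) => [/J0 //|Jn]; exact: h2.
Qed.

Hypothesis Hent : forall I : {set 'I_n},
  Hinf_ge (pmf_of mu) (fun z => (restrict I z.1, restrict I z.2))
          ((19 / 10) * log2 q%:R * #|I|%:R - t).

Lemma cell_bound A B (I : {set 'I_n}) : constS I A -> constS I B ->
  m (setX A B) <= powR 2 (- ((19 / 10) * log2 q%:R * #|I|%:R - t)).
Proof.
move=> cA cB.
case: (set_0Vmem A) => [->|[x0 x0A]].
  rewrite (_ : setX set0 B = set0) ?m_set0 ?powR_ge0 //.
  by apply/setP => -[x y]; rewrite !inE.
case: (set_0Vmem B) => [->|[y0 y0B]].
  rewrite (_ : setX A set0 = set0) ?m_set0 ?powR_ge0 //.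
  by apply/setP => -[x y]; rewrite !inE andbF.
apply: le_trans (Hent I (restrict I x0, restrict I y0)).
rewrite /dprob; apply: le_trans (m_sub (S2 := [set z | (restrict I z.1, restrict I z.2) == (restrict I x0, restrict I y0)]) _) _.
  apply/subsetP => -[x y]; rewrite !inE /= => /andP [xA yB].
  by rewrite xpair_eqE; apply/andP; split; apply/eqP; apply: restrict_eq => i iI;
    [apply: cA | apply: cB].
by rewrite /dprob le_eqVlt; apply/orP; left; apply/eqP; apply: eq_bigl => z; rewrite inE.
Qed.

Definition gam := powR (q%:R : R) (1 / 20).

Lemma gam_ge0 : 0 <= gam.
Proof. exact: powR_ge0. Qed.

Lemma pow2L (x : R) : (0 < q)%N -> powR 2 (x * log2 q%:R) = powR q%:R x.
Proof.
move=> q0; rewrite /powR.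
have -> : ((2 : R) == 0) = false by rewrite pnatr_eq0.
have -> : ((q%:R : R) == 0) = false by rewrite pnatr_eq0; apply/negbTE; rewrite -lt0n.
congr sequences.expR; rewrite /log2.
have l2 : ln (2 : R) != 0 by apply/lt0r_neq0; apply: ln_gt0; rewrite ltr1n.
by rewrite -mulrA divfK.
Qed.

Lemma gamE (c : nat) : (0 < q)%N -> powR q%:R (c%:R / 20) = gam ^+ c.
Proof.
move=> q0; rewrite (_ : c%:R / 20 = 1 / 20 * c%:R); last by rewrite mulrC mul1r.
by rewrite powRrM powR_mulrn // gam_ge0.
Qed.

Lemma gam_gt0 : (0 < q)%N -> 0 < gam.
Proof. by move=> q0; apply: powR_gt0; rewrite ltr0n. Qed.

Lemma gam20 : (0 < q)%N -> (q%:R : R) = gam ^+ 20.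
Proof.
move=> q0; rewrite -gamE // divff ?powRr1 // ?ler0n //.
by rewrite pnatr_eq0.
Qed.

Lemma heavy_thr (k : nat) : (0 < q)%N ->
  powR 2 (- ((4 / 5) * log2 q%:R * k%:R)) = (gam ^+ (16 * k))^-1.
Proof.
move=> q0; rewrite (_ : - ((4 / 5) * log2 q%:R * k%:R) = - ((16 * k)%:R / 20) * log2 q%:R).
  by rewrite pow2L // powRN gamE.
by by rewrite natrM; field.
Qed.

Lemma hyp_thr (s : nat) : (0 < q)%N ->
  powR 2 (- ((19 / 10) * log2 q%:R * s%:R - t)) = powR 2 t * (gam ^+ (38 * s))^-1.
Proof.
move=> q0; rewrite (_ : - ((19 / 10) * log2 q%:R * s%:R - t) = t + (- ((38 * s)%:R / 20)) * log2 q%:R).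
  by rewrite powRD ?pnatr_eq0 ?implybT // pow2L // powRN gamE.
by rewrite natrM; field.
Qed.


Lemma card_img (B : {set C}) (J : {set 'I_n}) :
  (#|[set restrict J y | y in B]| <= q ^ #|J|)%N.
Proof.
pose sJ := {i : 'I_n | i \in J}.
pose g (f : {ffun sJ -> 'I_q}) : V :=
  [ffun i => if insub i is Some j then Some (f j) else None].
pose h (y : C) : {ffun sJ -> 'I_q} := [ffun j => y (val j)].
have e : forall y, restrict J y = g (h y).
  move=> y; apply/ffunP => i; rewrite !ffunE; case: insubP => [j iJ vj|niJ].
    by rewrite ffunE vj iJ.
  by rewrite (negbTE niJ).
apply: leq_trans (_ : #|[set g f | f : {ffun sJ -> 'I_q}]| <= _)%N.
  apply: subset_leq_card; apply/subsetP => v /imsetP [y _ ->]; rewrite e.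
  by apply: imset_f.
apply: leq_trans (leq_imset_card _ _) _.
by rewrite card_ffun card_ord card_sig.
Qed.

Lemma sum_sqrt_gen (P : V -> {set T}) (W : {set V}) (k : nat) (M : R) :
  (0 < q)%N -> (forall v, v \notin W -> m (P v) = 0) -> (#|W| <= q ^ k)%N ->
  \sum_v m (P v) = M ->
  \sum_v Num.sqrt (m (P v)) <= gam ^+ (10 * k) * Num.sqrt M.
Proof.
move=> q0 hW cW eM.
have e1 : \sum_v Num.sqrt (m (P v)) = \sum_(v in W) Num.sqrt (m (P v)).
  rewrite [LHS](bigID (mem W)) /= [X in _ + X]big1 ?addr0 // => v vW.
  by rewrite hW // sqrtr0.
have e2 : \sum_v m (P v) = \sum_(v in W) m (P v).
  by rewrite [LHS](bigID (mem W)) /= [X in _ + X]big1 ?addr0 // => v vW; rewrite hW.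
rewrite e1; set S1 := \sum_(v in W) _.
have S10 : 0 <= S1 by apply: sumr_ge0 => v _; exact: sqrtr_ge0.
have M0 : 0 <= M by rewrite -eM; apply: sumr_ge0 => v _; exact: m_ge0.
have g0 := gam_ge0.
rewrite -(ler_pXn2r (n := 2)) // ?nnegrE; last by rewrite mulr_ge0 ?sqrtr_ge0 ?exprn_ge0.
apply: le_trans (cauchy_schwarz _ _) _.
under eq_bigr do rewrite sqr_sqrtr ?m_ge0 //.
rewrite -e2 eM exprMn sqr_sqrtr // -exprM mulnC exprM.
apply: ler_wpM2r => //.
rewrite -exprM (_ : (2 * (10 * k))%N = (20 * k)%N); last by lia.
rewrite exprM -gam20 // -natrX ler_nat.
by apply: leq_trans cW; rewrite leq_eqVlt; apply/orP; left; apply/eqP; apply: eq_card.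
Qed.

Definition rho := (2 * gam ^+ 18)^-1.
Definition Eb (K x : R) (s : nat) := K * Num.sqrt x * rho ^+ s.

Lemma rho_ge0 : 0 <= rho.
Proof. by rewrite /rho invr_ge0 mulr_ge0 ?exprn_ge0 ?gam_ge0. Qed.

Lemma Eb_ge0 K x s : 0 <= K -> 0 <= Eb K x s.
Proof. by move=> K0; rewrite /Eb !mulr_ge0 ?sqrtr_ge0 ?exprn_ge0 ?rho_ge0. Qed.

Lemma combine (K : R) (S S2 S1 : {set T}) (F : V -> {set T}) (s k : nat) :
  (0 < q)%N -> 0 <= K -> (0 < k)%N ->
  S = S2 :|: S1 -> [disjoint S2 & S1] -> S1 = \bigcup_v F v ->
  (forall v w, v != w -> [disjoint F v & F w]) ->
  (gam ^+ (16 * k))^-1 * m S < m S1 ->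
  \sum_v Num.sqrt (m (F v)) <= gam ^+ (10 * k) * Num.sqrt (m S1) ->
  (exists L E, part S2 L E /\ m E <= Eb K (m S2) s) ->
  (forall v, exists L E, part (F v) L E /\ m E <= Eb K (m (F v)) (s + k)) ->
  exists L E, part S L E /\ m E <= Eb K (m S) s.
Proof.
move=> q0 K0 k0 eS d21 eS1 disF heavy csum [L1 [E1 [p1 b1]]] hF.
have [L2 [E2 [p2 b2]]] := part_family disF hF.
rewrite -eS1 in p2.
have [pc mc] := part_cat p1 p2 d21.
exists (L1 ++ L2), (E1 :|: E2); split; first by rewrite eS.
rewrite mc; apply: le_trans (lerD b1 b2) _.
have mSe : m S = m S2 + m S1 by rewrite eS m_U.
have g0 := gam_gt0 q0.
set a := Num.sqrt (m S); set b := Num.sqrt (m S1); set e := Num.sqrt (m S2).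
set c := (gam ^+ (8 * k))^-1; set w := rho ^+ k * gam ^+ (10 * k).
have c0 : 0 <= c by rewrite /c invr_ge0 exprn_ge0 // ltW.
have w0 : 0 <= w by rewrite /w mulr_ge0 ?exprn_ge0 ?rho_ge0 // ltW.
have key : e + w * b <= a.
  apply: (@step_ineq _ a b e c w); rewrite ?sqrtr_ge0 //.
  - by rewrite /a /b /e !sqr_sqrtr ?m_ge0 // mSe addrC.
  - have -> : c = Num.sqrt ((gam ^+ (16 * k))^-1).
      rewrite /c (_ : (16 * k = (8 * k) * 2)%N); last by lia.
      by rewrite [gam ^+ (8 * k * 2)]exprM -[in RHS]exprVn sqrtr_sqr ger0_norm // invr_ge0 exprn_ge0 // ltW.
    rewrite /a /b -sqrtrM; last by rewrite invr_ge0 exprn_ge0 // ltW.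
    by apply: ler_wsqrtr; apply: ltW.
  - rewrite /w /c /rho exprVn exprMn.
    rewrite (_ : (gam ^+ 18) ^+ k = gam ^+ (8 * k) * gam ^+ (10 * k)); last first.
      by rewrite -exprM -exprD; congr (_ ^+ _); lia.
    have gn : gam != 0 by rewrite lt0r_neq0.
    rewrite (_ : 2 * ((2 ^+ k * (gam ^+ (8 * k) * gam ^+ (10 * k)))^-1 * gam ^+ (10 * k))
               = (2 / 2 ^+ k) * (gam ^+ (8 * k))^-1); last first.
      by field; rewrite ?expf_neq0 ?pnatr_eq0 //.
    rewrite -[X in _ <= X]mul1r ler_pM2r; last by rewrite invr_gt0 exprn_gt0.
    rewrite ler_pdivrMr ?exprn_gt0 // mul1r.
    by rewrite -[X in X <= _]expr1 ler_eXn2l // ltr1n.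
have -> : \sum_v Eb K (m (F v)) (s + k) = K * rho ^+ (s + k) * \sum_v Num.sqrt (m (F v)).
  rewrite mulr_sumr; apply: eq_bigr => v _; rewrite /Eb; ring.
apply: le_trans (_ : Eb K (m S2) s + K * rho ^+ (s + k) * (gam ^+ (10 * k) * b) <= _).
  apply: lerD => //; apply: ler_wpM2l => //.
  by rewrite mulr_ge0 ?exprn_ge0 ?rho_ge0.
rewrite /Eb -/a -/e exprD.
have -> : K * e * rho ^+ s + K * (rho ^+ s * rho ^+ k) * (gam ^+ (10 * k) * b)
        = K * rho ^+ s * (e + w * b) by rewrite /w; ring.
rewrite [X in _ <= X](_ : _ = K * rho ^+ s * a); last by ring.
by apply: ler_wpM2l => //; rewrite mulr_ge0 ?exprn_ge0 ?rho_ge0.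
Qed.

Lemma constS_sub (I : {set 'I_n}) (A A' : {set C}) :
  A' \subset A -> constS I A -> constS I A'.
Proof. by move=> sA cA x x' xA x'A; apply: cA; apply: (subsetP sA). Qed.

Lemma constS_U (I J : {set 'I_n}) (A : {set C}) u :
  constS I A -> constS (I :|: J) [set x in A | restrict J x == u].
Proof.
move=> cA x x'; rewrite !inE => /andP [xA /eqP xu] /andP [x'A /eqP x'u] i.
rewrite inE => /orP [iI|iJ]; first exact: cA.
by apply: (restrict_at (I := J)) => //; rewrite xu x'u.
Qed.

Lemma measure_lt (N i k a b a1 b1 c : nat) :
  (0 < k)%N -> (i + k <= n)%N -> (a1 <= c)%N -> (b1 <= c)%N ->
  ((n - i) * (2 * c).+1 + a + b < N.+1)%N ->
  ((n - (i + k)) * (2 * c).+1 + a1 + b1 < N)%N.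
Proof.
move=> k0 ikn a1c b1c h.
have e : (n - i = (n - (i + k)) + k)%N by lia.
rewrite e mulnDl in h.
have : ((2 * c).+1 <= k * (2 * c).+1)%N by rewrite leq_pmull.
lia.
Qed.

Lemma main_rec (K : R) : (0 < q)%N -> 0 <= K ->
  (forall s, (d < s)%N -> powR 2 t * (gam ^+ (38 * s))^-1 <= (K * rho ^+ s) ^+ 2) ->
  forall (I : {set 'I_n}) (A B : {set C}), constS I A -> constS I B ->
  exists L E, part (setX A B) L E /\ m E <= Eb K (m (setX A B)) #|I|.
Proof.
move=> q0 K0 Hd.
pose mes (I : {set 'I_n}) (A B : {set C}) := ((n - #|I|) * (2 * #|{: C}|).+1 + #|A| + #|B|)%N.
suff H : forall N I A B, (mes I A B < N)%N -> constS I A -> constS I B ->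
    exists L E, part (setX A B) L E /\ m E <= Eb K (m (setX A B)) #|I|.
  by move=> I A B; apply: (H (mes I A B).+1).
elim=> [//|N IH] I A B mN cA cB.
set S := setX A B.
case: (ltnP d #|I|) => [dI|Id].
  exists [::], S; split; first exact: part_dump.
  have mb := cell_bound cA cB; rewrite hyp_thr // in mb.
  have Kr0 : 0 <= K * rho ^+ #|I| by rewrite mulr_ge0 ?exprn_ge0 ?rho_ge0.
  have sq : Num.sqrt (m S) <= K * rho ^+ #|I|.
    rewrite -(ger0_norm Kr0) -sqrtr_sqr; apply: ler_wsqrtr.
    apply: (le_trans mb); exact: Hd.
  have -> : m S = Num.sqrt (m S) * Num.sqrt (m S) by rewrite -expr2 sqr_sqrtr // m_ge0.
  rewrite /Eb sqrtr_sqr ger0_norm ?sqrtr_ge0 //.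
  rewrite (_ : K * Num.sqrt (m S) * rho ^+ #|I| = Num.sqrt (m S) * (K * rho ^+ #|I|)); last by ring.
  by apply: ler_wpM2l => //; exact: sqrtr_ge0.
case: (ltrP 0 (m S)) => [mS|mS0]; last first.
  exists [::], S; split; first exact: part_dump.
  apply: (le_trans mS0); exact: Eb_ge0.
pose thr (J : {set 'I_n}) : R := powR 2 (- ((4 / 5) * log2 q%:R * #|J|%:R)).
pose okX (J : {set 'I_n}) := [forall u : V, \sum_(z | restrict J z.1 == u) cond_pmf mu S z <= thr J].
pose okY (J : {set 'I_n}) := [forall u : V, \sum_(z | restrict J z.2 == u) cond_pmf mu S z <= thr J].
case: (boolP [forall J : {set 'I_n}, (J \subset ~: I) ==> (J != set0) ==> (okX J && okY J)]) => [allok|].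
  exists [:: (A, B)], set0; split.
    apply: part_single; apply: (@good_of A B I) => // J JI Jn u.
      by have := forallP allok J; rewrite JI Jn /= => /andP [/forallP ok _]; exact: ok.
    by have := forallP allok J; rewrite JI Jn /= => /andP [_ /forallP ok]; exact: ok.
  by rewrite m_set0 Eb_ge0.
rewrite negb_forall => /existsP [J]; rewrite !negb_imply => /andP [JI /andP [Jn]].
have k0 : (0 < #|J|)%N by rewrite card_gt0.
have cIJ : #|I :|: J| = (#|I| + #|J|)%N.
  rewrite cardsU (_ : I :&: J = set0) ?cards0 ?subn0 //.
  apply/setP => i; rewrite !inE; apply/negP => /andP [iI iJ].
  by have := subsetP JI i iJ; rewrite inE iI.
have IJn : (#|I| + #|J| <= n)%N by rewrite -cIJ -[X in (_ <= X)%N]card_ord max_card.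
have thrE : thr J = (gam ^+ (16 * #|J|))^-1 by rewrite /thr heavy_thr.
have thr0 : 0 < thr J by rewrite /thr powR_gt0.
rewrite negb_and => /orP [].
- rewrite negb_forall => /existsP [u]; rewrite -ltNge => hv.
  set A1 := [set x in A | restrict J x == u]; set A2 := A :\: A1.
  pose F (v : V) := setX A1 [set y in B | restrict J y == v].
  have eS1 : [set z in S | restrict J z.1 == u] = setX A1 B.
    by apply/setP => -[x y]; rewrite !inE /= andbAC.
  rewrite cond_sum // eS1 ltr_pdivlMr // thrE in hv.
  have mS1 : 0 < m (setX A1 B).
    apply: le_lt_trans hv; rewrite mulr_ge0 ?(ltW mS) // invr_ge0 exprn_ge0 //.
    exact: gam_ge0.
  have [[x0 y0] z0] : exists z, z \in setX A1 B.
    apply/set0Pn; apply/negP => /eqP e; move: mS1; rewrite e m_set0 ltxx //.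
  move: z0; rewrite inE /= => /andP [x0A1 y0B].
  have A1A : A1 \subset A by apply/subsetP => x; rewrite inE => /andP [].
  apply: (@combine K S (setX A2 B) (setX A1 B) F #|I| #|J|) => //.
  + apply/setP => -[x y]; rewrite !inE /=.
    by case: (x \in A); case: (restrict J x == u); case: (y \in B).
  + rewrite -setI_eq0; apply/eqP/setP => -[x y]; rewrite !inE /=.
    by case: (x \in A); case: (restrict J x == u); case: (y \in B).
  + apply/setP => -[x y]; apply/idP/bigcupP.
      rewrite inE /= => /andP [xA1 yB]; exists (restrict J y) => //.
      by rewrite /F inE /= xA1 inE yB eqxx.
    by move=> [v _]; rewrite !inE /= => /andP [-> /andP [-> _]].
  + move=> v w vw; rewrite -setI_eq0; apply/eqP/setP => -[x y]; rewrite !inE /=.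
    apply/negP => /andP [/andP [_ /andP [_ /eqP e1]] /andP [_ /andP [_ /eqP e2]]].
    by move: vw; rewrite -e1 -e2 eqxx.
  + apply: (@sum_sqrt_gen F [set restrict J y | y in B]) => //.
    * move=> v vW; rewrite (_ : F v = set0) ?m_set0 //.
      apply/setP => -[x y]; rewrite !inE /=; apply/negP => /andP [_ /andP [yB /eqP e]].
      by move: vW; rewrite -e imset_f.
    * exact: card_img.
    * rewrite -m_bigcup.
        congr m; apply/setP => -[x y]; apply/bigcupP/idP.
          by move=> [v _]; rewrite !inE /= => /andP [-> /andP [-> _]].
        rewrite inE /= => /andP [xA1 yB]; exists (restrict J y) => //.
        by rewrite /F inE /= xA1 inE yB eqxx.
      move=> v w vw; rewrite -setI_eq0; apply/eqP/setP => -[x y]; rewrite !inE /=.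
      apply/negP => /andP [/andP [_ /andP [_ /eqP e1]] /andP [_ /andP [_ /eqP e2]]].
      by move: vw; rewrite -e1 -e2 eqxx.
  + apply: IH; last 2 first.
    * by apply: constS_sub cA; apply/subsetP => x; rewrite inE => /andP [].
    * exact: cB.
    have : (#|A2| < #|A|)%N.
      apply: proper_card; apply/properP; split.
        by apply/subsetP => x; rewrite inE => /andP [].
      by exists x0; [exact: (subsetP A1A) | rewrite inE x0A1].
    move: mN; rewrite /mes; lia.
  + move=> v; rewrite -cIJ; apply: IH.
    * rewrite /mes cIJ; apply: measure_lt mN => //; exact: max_card.
    * exact: constS_U.
    * exact: constS_U.

- rewrite negb_forall => /existsP [u]; rewrite -ltNge => hv.
  set B1 := [set y in B | restrict J y == u]; set B2 := B :\: B1.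
  pose F (v : V) := setX [set x in A | restrict J x == v] B1.
  have eS1 : [set z in S | restrict J z.2 == u] = setX A B1.
    by apply/setP => -[x y]; rewrite !inE /= andbA.
  rewrite cond_sum // eS1 ltr_pdivlMr // thrE in hv.
  have mS1 : 0 < m (setX A B1).
    apply: le_lt_trans hv; rewrite mulr_ge0 ?(ltW mS) // invr_ge0 exprn_ge0 //.
    exact: gam_ge0.
  have [[x0 y0] z0] : exists z, z \in setX A B1.
    apply/set0Pn; apply/negP => /eqP e; move: mS1; rewrite e m_set0 ltxx //.
  move: z0; rewrite inE /= => /andP [x0A y0B1].
  have B1B : B1 \subset B by apply/subsetP => x; rewrite inE => /andP [].
  apply: (@combine K S (setX A B2) (setX A B1) F #|I| #|J|) => //.
  + apply/setP => -[x y]; rewrite !inE /=.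
    by case: (x \in A); case: (restrict J y == u); case: (y \in B).
  + rewrite -setI_eq0; apply/eqP/setP => -[x y]; rewrite !inE /=.
    by case: (x \in A); case: (restrict J y == u); case: (y \in B).
  + apply/setP => -[x y]; apply/idP/bigcupP.
      rewrite inE /= => /andP [xA yB1]; exists (restrict J x) => //.
      by rewrite /F inE /= yB1 inE xA eqxx.
    by move=> [v _]; rewrite !inE /= => /andP [/andP [-> _] ->].
  + move=> v w vw; rewrite -setI_eq0; apply/eqP/setP => -[x y]; rewrite !inE /=.
    apply/negP => /andP [/andP [/andP [_ /eqP e1] _] /andP [/andP [_ /eqP e2] _]].
    by move: vw; rewrite -e1 -e2 eqxx.
  + apply: (@sum_sqrt_gen F [set restrict J x | x in A]) => //.
    * move=> v vW; rewrite (_ : F v = set0) ?m_set0 //.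
      apply/setP => -[x y]; rewrite !inE /=; apply/negP => /andP [/andP [xA /eqP e] _].
      by move: vW; rewrite -e imset_f.
    * exact: card_img.
    * rewrite -m_bigcup.
        congr m; apply/setP => -[x y]; apply/bigcupP/idP.
          by move=> [v _]; rewrite !inE /= => /andP [/andP [-> _] ->].
        rewrite inE /= => /andP [xA yB1]; exists (restrict J x) => //.
        by rewrite /F inE /= yB1 inE xA eqxx.
      move=> v w vw; rewrite -setI_eq0; apply/eqP/setP => -[x y]; rewrite !inE /=.
      apply/negP => /andP [/andP [/andP [_ /eqP e1] _] /andP [/andP [_ /eqP e2] _]].
      by move: vw; rewrite -e1 -e2 eqxx.
  + apply: IH; last 2 first.
    * exact: cA.
    * by apply: constS_sub cB; apply/subsetP => x; rewrite inE => /andP [].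
    have : (#|B2| < #|B|)%N.
      apply: proper_card; apply/properP; split.
        by apply/subsetP => x; rewrite inE => /andP [].
      by exists y0; [exact: (subsetP B1B) | rewrite inE y0B1].
    move: mN; rewrite /mes; lia.
  + move=> v; rewrite -cIJ; apply: IH.
    * rewrite /mes cIJ; apply: measure_lt mN => //; exact: max_card.
    * exact: constS_U.
    * exact: constS_U.
Qed.

Lemma count_ge2 (X : Type) (a : pred X) (s : seq X) (x0 : X) (i j : 'I_(size s)) :
  i != j -> a (nth x0 s i) -> a (nth x0 s j) -> (1 < count a s)%N.
Proof.
move=> ij ai aj.
rewrite -sum1_count big_mkcond /= (big_nth x0) big_mkord (bigD1 i) //= (bigD1 j) //=.
rewrite ai aj; first by rewrite addnA.
by rewrite eq_sym.
Qed.

Lemma of_part (L : seq ({set C} * {set C})) (E : {set T}) :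
  part [set: T] L E ->
  exists (N : nat) (A B : 'I_N -> {set C}) (Err : {set T}),
    [/\ (forall z, z \in Err \/ exists i, z \in setX (A i) (B i)),
        (forall i j, i != j -> [disjoint setX (A i) (B i) & setX (A j) (B j)]),
        (forall i, [disjoint setX (A i) (B i) & Err]),
        (forall i, 0 < dprob mu (setX (A i) (B i)) /\
                   aligned_CBD (cond_pmf mu (setX (A i) (B i))) d) &
        dprob mu Err = m E].
Proof.
move=> [gL hL].
pose r0 : {set C} * {set C} := (set0, set0).
exists (size L), (fun i => (nth r0 L i).1), (fun i => (nth r0 L i).2), E; split => //.
- move=> z; case zE: (z \in E); first by left.
  right; have := hL z; rewrite zE inE addn0 => c1.
  have : has (fun r => z \in setX r.1 r.2) L by rewrite has_count c1.
  move=> /hasP [r rL zr].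
  have iL : (index r L < size L)%N by rewrite index_mem.
  by exists (Ordinal iL); rewrite /= nth_index.
- move=> i j ij; rewrite -setI_eq0; apply/eqP/setP => z; rewrite inE [in RHS]inE.
  apply/negP => /andP [zi zj].
  have := count_ge2 (a := fun r => z \in setX r.1 r.2) ij zi zj.
  by have := hL z; rewrite inE; lia.
- move=> i; rewrite -setI_eq0; apply/eqP/setP => z; rewrite inE [in RHS]inE.
  apply/negP => /andP [zi zE].
  have : (0 < count (fun r => z \in setX r.1 r.2) L)%N.
    rewrite -has_count; apply/hasP; exists (nth r0 L i) => //.
    exact: mem_nth.
  by have := hL z; rewrite inE zE; lia.
- move=> i; apply: gL; exact: mem_nth.
Qed.

Lemma marg_bound (J : {set 'I_n}) (u : V) (f g : T -> C) :
  (0 < q)%N ->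
  (forall w : V, \sum_(z | (restrict J (f z) == u) && (restrict J (g z) == w)) pmf_of mu z
     <= powR 2 t * (gam ^+ (38 * #|J|))^-1) ->
  m [set z | restrict J (f z) == u] <= (q%:R) ^+ #|J| * (powR 2 t * (gam ^+ (38 * #|J|))^-1).
Proof.
move=> q0 hw.
rewrite /dprob (partition_big_imset (fun z : T => restrict J (g z))) /=.
set W := [set _ | _ in _].
apply: le_trans (_ : \sum_(w in W) (powR 2 t * (gam ^+ (38 * #|J|))^-1) <= _).
  apply: ler_sum => w _; apply: le_trans (hw w).
  by rewrite le_eqVlt; apply/orP; left; apply/eqP; apply: eq_bigl => z; rewrite inE.
rewrite sumr_const -[_ *+ #|W|]mulr_natl; apply: ler_wpM2r.
  by rewrite mulr_ge0 ?powR_ge0 // invr_ge0 exprn_ge0 // gam_ge0.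
rewrite -natrX ler_nat; apply: leq_trans (card_img [set: C] J).
apply: subset_leq_card; apply/subsetP => w /imsetP [z _ ->].
by apply: imset_f; rewrite inE.
Qed.

Lemma final :
  exists (N : nat) (A B : 'I_N -> {set C}) (Err : {set T}),
    [/\ (forall z, z \in Err \/ exists i, z \in setX (A i) (B i)),
        (forall i j, i != j -> [disjoint setX (A i) (B i) & setX (A j) (B j)]),
        (forall i, [disjoint setX (A i) (B i) & Err]),
        (forall i, 0 < dprob mu (setX (A i) (B i)) /\
                   aligned_CBD (cond_pmf mu (setX (A i) (B i))) d) &
        dprob mu Err <= powR 2 t * (d%:R * powR q%:R (- (1 / 20))) ^+ d].
Proof.
set RHS := powR 2 t * _.
have fin : forall L E, part [set: T] L E -> m E <= RHS ->
  exists (N : nat) (A B : 'I_N -> {set C}) (Err : {set T}),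
    [/\ (forall z, z \in Err \/ exists i, z \in setX (A i) (B i)),
        (forall i j, i != j -> [disjoint setX (A i) (B i) & setX (A j) (B j)]),
        (forall i, [disjoint setX (A i) (B i) & Err]),
        (forall i, 0 < dprob mu (setX (A i) (B i)) /\
                   aligned_CBD (cond_pmf mu (setX (A i) (B i))) d) &
        dprob mu Err <= RHS].
  move=> L E p b; have [N [A [B [Err [h1 h2 h3 h4 h5]]]]] := of_part p.
  by exists N, A, B, Err; split => //; rewrite h5.
have RHS0 : 0 <= RHS by rewrite mulr_ge0 ?powR_ge0 // exprn_ge0 // mulr_ge0 ?ler0n ?powR_ge0.
case: (posnP #|{: T}|) => [T0|Tpos].
  apply: (fin [::] set0); last by rewrite m_set0.
  by split => // z; have := card0_eq T0 z; rewrite !inE.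
have [z0 _] := card_gt0P Tpos.
have sum1 : \sum_z pmf_of mu z = 1.
  rewrite /pmf_of -mulr_suml Hmu.2 divff // pnatr_eq0 -lt0n //.
have T21 : 1 <= powR 2 t.
  have h := Hent set0 (restrict set0 z0.1, restrict set0 z0.2).
  rewrite cards0 mulr0 sub0r opprK in h; apply: (le_trans _ h).
  rewrite -sum1 le_eqVlt; apply/orP; left; apply/eqP; apply: eq_bigl => z.
  rewrite xpair_eqE; apply/esym/andP; split; apply/eqP; apply: restrict_eq => i; by rewrite inE.
have mT : m [set: T] = 1 by rewrite -sum1 /dprob; apply: eq_bigl => z; rewrite inE.
case: (lerP 1 RHS) => [big|small].
  apply: (fin [::] [set: T]); first exact: part_dump.
  by rewrite mT.
set S := setX [set: C] [set: C].
have eST : S = [set: T] by apply/setP => -[x y]; rewrite !inE.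
have mS1 : m S = 1 by rewrite eST.
pose thr (J : {set 'I_n}) : R := powR 2 (- ((4 / 5) * log2 q%:R * #|J|%:R)).
pose okX (J : {set 'I_n}) := [forall u : V, \sum_(z | restrict J z.1 == u) cond_pmf mu S z <= thr J].
pose okY (J : {set 'I_n}) := [forall u : V, \sum_(z | restrict J z.2 == u) cond_pmf mu S z <= thr J].
have cT : constS set0 [set: C] by move=> x x' _ _ i; rewrite inE.
case: (boolP [forall J : {set 'I_n}, (J \subset ~: set0) ==> (J != set0) ==> (okX J && okY J)]) => [allok|].
  apply: (fin [:: ([set: C], [set: C])] set0); last by rewrite m_set0.
  rewrite -eST; apply: part_single; apply: (@good_of _ _ set0); rewrite ?cards0 ?mS1 ?ltr01 //.
    move=> J JI Jn u.
    by have := forallP allok J; rewrite JI Jn /= => /andP [/forallP ok _]; exact: ok.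
  move=> J JI Jn u.
  by have := forallP allok J; rewrite JI Jn /= => /andP [_ /forallP ok]; exact: ok.
rewrite negb_forall => /existsP [J]; rewrite !negb_imply => /andP [JI /andP [Jn notok]].
have q0 : (0 < q)%N.
  rewrite lt0n; apply/eqP => qe; case/set0Pn: Jn => i _.
  by move: (nat_of_ord (z0.1 i)) (ltn_ord (z0.1 i)) => k; rewrite qe.
have g0 := gam_gt0 q0.
have g1 : 1 <= gam.
  have : powR (q%:R : R) 0 <= gam.
    by apply: ler_powR; rewrite ?ler1n ?divr_ge0.
  by rewrite powRr0.
set k := #|J|.
have k0 : (0 < k)%N by rewrite card_gt0.
set T2 := powR 2 t.
have mb : exists P : pred T, thr J < m [set z | P z] /\
    m [set z | P z] <= (q%:R) ^+ k * (T2 * (gam ^+ (38 * k))^-1).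
  move: notok; rewrite negb_and => /orP [] /forallPn [u];
    rewrite -ltNge cond_sum ?mS1 ?divr1 ?ltr01 // => hv.
  - exists (fun z => restrict J z.1 == u); split.
      by move: hv; congr (_ < m _); apply/setP => -[x y]; rewrite !inE.
    apply: (marg_bound (g := snd)) => // w.
    rewrite -hyp_thr //; apply: le_trans (Hent J (u, w)).
    by rewrite le_eqVlt; apply/orP; left; apply/eqP; apply: eq_bigl => z; rewrite xpair_eqE.
  - exists (fun z => restrict J z.2 == u); split.
      by move: hv; congr (_ < m _); apply/setP => -[x y]; rewrite !inE.
    apply: (marg_bound (g := fst)) => // w.
    rewrite -hyp_thr //; apply: le_trans (Hent J (w, u)).
    by rewrite le_eqVlt; apply/orP; left; apply/eqP; apply: eq_bigl => z; rewrite xpair_eqE andbC.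
have gT2 : gam ^+ 2 < T2.
  case: mb => P [h1 h2]; have := lt_le_trans h1 h2.
  rewrite /thr heavy_thr // gam20 // -exprM.
  set G := gam ^+ k.
  have E c : gam ^+ (c * k) = G ^+ c by rewrite mulnC exprM.
  rewrite !E => h.
  have GP : 0 < G by rewrite exprn_gt0.
  have h' : G ^+ 22 < G ^+ 20 * T2.
    have e1 : G ^+ 22 = (G ^+ 16)^-1 * G ^+ 38.
      by rewrite (_ : 38 = 16 + 22)%N // exprD mulrA mulVf ?mul1r // expf_neq0 // lt0r_neq0.
    have e2 : G ^+ 20 * T2 = G ^+ 20 * (T2 * (G ^+ 38)^-1) * G ^+ 38.
      by rewrite -!mulrA mulVf ?mulr1 // expf_neq0 // lt0r_neq0.
    by rewrite e1 e2 ltr_pM2r // exprn_gt0.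
  have hG2 : G ^+ 2 < T2.
    by move: h'; rewrite (_ : 22 = 20 + 2)%N // exprD ltr_pM2l // exprn_gt0.
  apply: le_lt_trans hG2.
  rewrite ler_pXn2r // ?nnegrE ?(ltW g0) ?(ltW GP) //.
  exact: ler_eXnr.
have pq : powR q%:R (- (1 / 20)) = gam^-1 by rewrite powRN.
rewrite /RHS pq -/T2 in small.
case: (ltnP 1 d) => [d2|d1]; last first.
  have [de|de] : d = 0%N \/ d = 1%N by lia.
    by move: small; rewrite de expr0 mulr1 ltNge T21.
  move: small; rewrite de expr1 mul1r ltNge; move/negP; case.
  have : 1 <= gam by [].
  move=> _; apply: le_trans (_ : gam <= T2 / gam).
    exact: g1.
  rewrite ler_pdivlMr // -expr2; exact: ltW.
have T20 : 0 <= T2 by apply: le_trans T21.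
have gd : d%:R < gam.
  have h : (d%:R * gam^-1) ^+ d < 1.
    apply: le_lt_trans small; rewrite -[X in X <= _]mul1r; apply: ler_wpM2r => //.
    by rewrite exprn_ge0 // mulr_ge0 ?ler0n // invr_ge0 ltW.
  have : d%:R * gam^-1 < 1.
    rewrite ltNge; apply/negP => h1; move: h; rewrite ltNge => /negP; apply.
    exact: exprn_ege1.
  by rewrite ltr_pdivrMr // mul1r.
have g2 : 2 <= gam by apply: le_trans (ltW gd); rewrite ler_nat.
pose K := Num.sqrt T2 * (2 / gam) ^+ d.+1.
have r0 : 0 <= 2 / gam by rewrite divr_ge0 // ltW.
have r1 : 2 / gam <= 1 by rewrite ler_pdivrMr // mul1r.
have K0 : 0 <= K by rewrite mulr_ge0 ?sqrtr_ge0 ?exprn_ge0.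
have Hd : forall s, (d < s)%N -> powR 2 t * (gam ^+ (38 * s))^-1 <= (K * rho ^+ s) ^+ 2.
  move=> s ds; rewrite -/T2.
  have e19 : (gam ^+ (19 * s))^-1 = (2 / gam) ^+ s * rho ^+ s.
    rewrite -exprMn /rho (_ : 2 / gam * (2 * gam ^+ 18)^-1 = (gam ^+ 19)^-1).
      by rewrite exprVn exprM.
    by field; rewrite lt0r_neq0.
  have e38 : (gam ^+ (38 * s))^-1 = ((gam ^+ (19 * s))^-1) ^+ 2.
    by rewrite exprVn -exprM (_ : (19 * s * 2 = 38 * s)%N) // mulnC mulnA.
  rewrite e38 e19 /K -[Num.sqrt T2 * _ * _]mulrA [X in _ <= X]exprMn sqr_sqrtr //; apply: ler_wpM2l => //.
  rewrite ler_pXn2r ?nnegrE ?mulr_ge0 ?exprn_ge0 ?rho_ge0 //.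
  by apply: ler_wpM2r; rewrite ?exprn_ge0 ?rho_ge0 //; apply: ler_wiXn2l.
have [L [E [p b]]] := main_rec q0 K0 Hd cT cT.
apply: (fin L E); first by rewrite -eST.
apply: le_trans b _; rewrite /Eb -/S mS1 sqrtr1 cards0 expr0 !mulr1.
rewrite /RHS pq -/T2 /K; apply: ler_pM; rewrite ?sqrtr_ge0 ?exprn_ge0 //.
  rewrite -[X in _ <= X](sqr_sqrtr T20) expr2 ler_peMr ?sqrtr_ge0 //.
  by rewrite -sqrtr1 ler_wsqrtr.
rewrite !expr_div_n ler_pdivrMr ?exprn_gt0 //.
rewrite [gam ^+ d.+1]exprSr mulrA divfK ?expf_neq0 ?lt0r_neq0 //.
apply: le_trans (_ : d%:R ^+ d.+1 <= _).
  by rewrite ler_pXn2r ?nnegrE ?ler0n // ler_nat.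
by rewrite exprSr ler_wpM2l ?exprn_ge0 ?ler0n // ltW.
Qed.

End Main.

Theorem theorem6p4 (R : realType) (n q : nat) (t : R)
    (mu : cube n q * cube n q -> R) :
  is_density mu ->
  (forall I : {set 'I_n},
     Hinf_ge (pmf_of mu) (fun z => (restrict I z.1, restrict I z.2))
             ((19 / 10) * log2 q%:R * #|I|%:R - t)) ->
  forall d : nat,
  exists (N : nat) (A B : 'I_N -> {set cube n q})
         (Err : {set cube n q * cube n q}),
    [/\ (* partition of [q]^n x [q]^n into the rectangles A_i x B_i and Err *)
        (forall z, z \in Err \/ exists i, z \in setX (A i) (B i)),
        (forall i j, i != j -> [disjoint setX (A i) (B i) & setX (A j) (B j)]),
        (forall i, [disjoint setX (A i) (B i) & Err]),
        (* (1): conditioned on R_i (a positive-probability event), X_i, Y_i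
           are aligned d-CBD *)
        (forall i, 0 < dprob mu (setX (A i) (B i)) /\
                   aligned_CBD (cond_pmf mu (setX (A i) (B i))) d) &
        (* (2) *)
        dprob mu Err <= powR 2 t * (d%:R * powR q%:R (- (1 / 20))) ^+ d].
Proof.
move=> Hmu Hent d.
exact: (final Hmu d Hent).
Qed.
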